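(* Assume each operator $L_r:Lip_d(I)\to Lip_d(I)$, $r\in\mathbb{N}$, is continuous. Then the non-stationary fractal operator $\mathfrak{F}^\alpha_b:Lip_d(I)\to C(I)$, $\mathfrak{F}^\alpha_b(f)=f^\alpha_b$, is continuous.
   Context: Setting: $I=[x_0,x_N]$ with partition $\Delta: x_0<x_1<\dots<x_N$, $I_i=[x_{i-1},x_i]$, $l_i:I\to I_i$ the increasing affine bijection $l_i(x)=\frac{x_i-x_{i-1}}{x_N-x_0}x+\frac{x_Nx_{i-1}-x_0x_i}{x_N-x_0}$, and $Q_i=l_i^{-1}$. Scaling functions $\alpha_{i,r}:I\to\mathbb{R}$ ($i=1,\dots,N$, $r\in\mathbb{N}$) are continuous with $\|\alpha\|_\infty:=\sup_{r}\max_i\|\alpha_{i,r}\|_\infty<1$. $Lip_d(I)$ ($0<d\le1$) is the space of real functions $g$ on $I$ with $\sup_{x\ne y}|g(x)-g(y)|/|x-y|^d<\infty$, regarded as a subset of $C(I)$ with the supremum norm (all topologies here are those of the supremum norm). $L_r:Lip_d(I)\to Lip_d(I)$ ($r\in\mathbb{N}$) are operators (not necessarily linear) with $(L_rg)(x_0)=g(x_0)$, $(L_rg)(x_N)=g(x_N)$ for all $g$, and $\sup_r\|L_r\|_\infty<\infty$, where $\|L_r\|_\infty=\sup_{g\ne0}\|L_rg\|_\infty/\|g\|_\infty$. Non-stationary $\alpha$-fractal function: for $f\in C(I)$ and base functions $b_r\in C(I)$ with $b_r(x_0)=f(x_0)$, $b_r(x_N)=f(x_N)$, $\sup_r\|b_r\|_\infty<\infty$,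 let $C_f(I)=\{g\in C(I):g(x_0)=f(x_0),g(x_N)=f(x_N)\}$ and $T^{\alpha_r}:C_f(I)\to C_f(I)$, $(T^{\alpha_r}g)(x)=f(x)+\alpha_{i,r}(Q_i(x))(g-b_r)(Q_i(x))$ for $x\in I_i$. For every $g\in C_f(I)$, $T^{\alpha_1}\circ\cdots\circ T^{\alpha_r}g$ converges uniformly as $r\to\infty$ to a function independent of $g$; this is the non-stationary $\alpha$-fractal function. $f^\alpha_b$ denotes it for $f\in Lip_d(I)$ with $b_r=L_rf$. *)

(* Defs.v *)
From Stdlib Require Import Reals Lra Lia.
Open Scope R_scope.

(* Partition xs 0 < xs 1 < ... < xs N of I = [xs 0, xs N]. *)
Definition inI (xs : nat -> R) (N : nat) (x : R) : Prop := xs 0%nat <= x <= xs N.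

(* Q_i = l_i^{-1}, with l_i(x) = (x_i-x_{i-1})/(x_N-x_0) x + (x_N x_{i-1} - x_0 x_i)/(x_N-x_0) *)
Definition lmap (xs : nat -> R) (N i : nat) (x : R) : R :=
  (xs i - xs (i-1)%nat) / (xs N - xs 0%nat) * x
  + (xs N * xs (i-1)%nat - xs 0%nat * xs i) / (xs N - xs 0%nat).
Definition Qmap (xs : nat -> R) (N i : nat) (y : R) : R :=
  ((xs N - xs 0%nat) * y - (xs N * xs (i-1)%nat - xs 0%nat * xs i))
  / (xs i - xs (i-1)%nat).

(* For x in I: an index i in 1..N with x in I_i = [x_{i-1}, x_i]
   (namely the smallest such i). *)
Fixpoint seg (xs : nat -> R) (n : nat) (x : R) : nat :=
  match n with
  | O => 1%nat
  | S O => 1%nat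
  | S k => if Rle_dec x (xs k) then seg xs k x else n
  end.

Definition cont_on_I (xs : nat -> R) (N : nat) (g : R -> R) : Prop :=
  forall x, inI xs N x -> forall eps, 0 < eps -> exists delta, 0 < delta /\
    forall y, inI xs N y -> Rabs (y - x) < delta -> Rabs (g y - g x) < eps.

Definition lipd (xs : nat -> R) (N : nat) (d : R) (g : R -> R) : Prop :=
  exists K, forall x y, inI xs N x -> inI xs N y -> x <> y ->
    Rabs (g x - g y) <= K * Rpower (Rabs (x - y)) d.

Definition dist_le (xs : nat -> R) (N : nat) (g h : R -> R) (c : R) : Prop :=
  forall x, inI xs N x -> Rabs (g x - h x) <= c.

Definition in_Cf (xs : nat -> R) (N : nat) (f g : R -> R) : Prop :=
  cont_on_I xs N g /\ g (xs 0%nat) = f (xs 0%nat) /\ g (xs N) = f (xs N).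

Definition Tmap (xs : nat -> R) (N : nat) (alpha : nat -> nat -> R -> R)
  (f b : R -> R) (r : nat) (g : R -> R) : R -> R :=
  fun x => let i := seg xs N x in
    f x + alpha i r (Qmap xs N i x) * (g (Qmap xs N i x) - b (Qmap xs N i x)).

(* compT n g = T^{alpha_0} o T^{alpha_1} o ... o T^{alpha_{n-1}} g,
   with base functions b_r = L r f *)
Fixpoint compT (xs : nat -> R) (N : nat) (alpha : nat -> nat -> R -> R)
  (L : nat -> (R -> R) -> (R -> R)) (f : R -> R) (n : nat) (g : R -> R)
  : R -> R :=
  match n with
  | O => g
  | S m => compT xs N alpha L f m (Tmap xs N alpha f (L m f) m g)
  end.

(* phi is the non-stationary alpha-fractal function f^alpha_b (b_r = L_r f):
   for every g in C_f(I), compT n g converges uniformly on I to phi. *)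
Definition is_fractal (xs : nat -> R) (N : nat) (alpha : nat -> nat -> R -> R)
  (L : nat -> (R -> R) -> (R -> R)) (f phi : R -> R) : Prop :=
  forall g, in_Cf xs N f g ->
    forall eps, 0 < eps -> exists n0 : nat, forall n, (n0 <= n)%nat ->
      dist_le xs N (compT xs N alpha L f n g) phi eps.

(* Main.v *)
Require Import Defs.
From Stdlib Require Import Reals Lra Lia Classical ClassicalEpsilon.
Open Scope R_scope.

Lemma xs_mono0 (N : nat) (xs : nat -> R)
  (Hxs : forall k, (k < N)%nat -> xs k < xs (S k)) :
  forall k, (k <= N)%nat -> xs 0%nat <= xs k.
Proof.
  induction k; intros Hk. lra.
  assert (xs k < xs (S k)) by (apply Hxs; lia).
  assert (xs 0%nat <= xs k) by (apply IHk; lia). lra.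
Qed.

Lemma seg_prop (N : nat) (xs : nat -> R)
  (Hxs : forall k, (k < N)%nat -> xs k < xs (S k)) (x : R) :
  forall n, (1 <= n <= N)%nat -> xs 0%nat <= x <= xs n ->
  (1 <= seg xs n x <= n)%nat /\ xs (seg xs n x - 1)%nat <= x <= xs (seg xs n x).
Proof.
  induction n as [|n IH]; intros Hn Hx. lia.
  destruct n as [|n].
  - simpl. split. lia. exact Hx.
  - cbn [seg]. destruct (Rle_dec x (xs (S n))) as [Hle|Hgt].
    + assert (H := IH ltac:(lia) ltac:(lra)). cbn [seg] in H. split. lia. apply H.
    + split. lia. replace (S (S n) - 1)%nat with (S n) by lia. lra.
Qed.

Lemma Q_in (N : nat) (xs : nat -> R)
  (Hxs : forall k, (k < N)%nat -> xs k < xs (S k)) (i : nat) (x : R) :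
  (1 <= i <= N)%nat -> xs (i-1)%nat <= x <= xs i -> inI xs N (Qmap xs N i x).
Proof.
  intros Hi Hx. unfold inI, Qmap.
  assert (HD : xs (i-1)%nat < xs i).
  { replace i with (S (i-1)) at 2 by lia. apply Hxs. lia. }
  assert (H0N : xs 0%nat <= xs N) by (apply (xs_mono0 N); auto).
  set (a := xs (i-1)%nat) in *. set (b := xs i) in *.
  set (x0 := xs 0%nat) in *. set (xN := xs N) in *.
  set (q := ((xN - x0) * x - (xN * a - x0 * b)) / (b - a)).
  assert (Hq : q * (b - a) = (xN - x0) * x - (xN * a - x0 * b)).
  { unfold q. field. lra. }
  split.
  - apply Rmult_le_reg_r with (b - a). lra. nra.
  - apply Rmult_le_reg_r with (b - a). lra. nra.
Qed.

Lemma seg_Q (N : nat) (xs : nat -> R) (HN : (1 <= N)%nat)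
  (Hxs : forall k, (k < N)%nat -> xs k < xs (S k)) (x : R) :
  inI xs N x -> (1 <= seg xs N x <= N)%nat /\ inI xs N (Qmap xs N (seg xs N x) x).
Proof.
  intros Hx. destruct (seg_prop N xs Hxs x N ltac:(lia) Hx) as [H1 H2].
  split; auto. apply Q_in; auto.
Qed.

Lemma Tstep (N : nat) (xs : nat -> R) (HN : (1 <= N)%nat)
  (Hxs : forall k, (k < N)%nat -> xs k < xs (S k))
  (alpha : nat -> nat -> R -> R) (s : R)
  (Hs : forall i r x, (1 <= i <= N)%nat -> inI xs N x -> Rabs (alpha i r x) <= s)
  f1 f2 b1 b2 k a1 a2 cf cb D :
  0 <= s -> dist_le xs N f1 f2 cf -> dist_le xs N b1 b2 cb -> dist_le xs N a1 a2 D ->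
  dist_le xs N (Tmap xs N alpha f1 b1 k a1) (Tmap xs N alpha f2 b2 k a2) (cf + s * (D + cb)).
Proof.
  intros Hs0 Hf Hb Ha x Hx. unfold Tmap.
  destruct (seg_Q N xs HN Hxs x Hx) as [Hi Hq].
  set (i := seg xs N x) in *. set (q := Qmap xs N i x) in *.
  specialize (Hf x Hx). specialize (Hb q Hq). specialize (Ha q Hq).
  specialize (Hs i k q Hi Hq).
  replace (f1 x + alpha i k q * (a1 q - b1 q) - (f2 x + alpha i k q * (a2 q - b2 q)))
    with ((f1 x - f2 x) + alpha i k q * ((a1 q - a2 q) - (b1 q - b2 q))) by ring.
  eapply Rle_trans. apply Rabs_triang. apply Rplus_le_compat. exact Hf.
  rewrite Rabs_mult. apply Rmult_le_compat; try apply Rabs_pos. exact Hs.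
  eapply Rle_trans. apply Rabs_triang. rewrite Rabs_Ropp. lra.
Qed.

Lemma comp_bound (N : nat) (xs : nat -> R) (alpha : nat -> nat -> R -> R)
  (L : nat -> (R -> R) -> (R -> R)) f1 f2 Y s (Hs0 : 0 <= s) :
  forall n,
  (forall k, (k < n)%nat -> forall a b D, 0 <= D -> dist_le xs N a b (Y + D) ->
     dist_le xs N (Tmap xs N alpha f1 (L k f1) k a) (Tmap xs N alpha f2 (L k f2) k b) (Y + s * D)) ->
  forall g1 g2 D, 0 <= D -> dist_le xs N g1 g2 (Y + D) ->
  dist_le xs N (compT xs N alpha L f1 n g1) (compT xs N alpha L f2 n g2) (Y + s ^ n * D).
Proof.
  induction n as [|n IH]; intros Hst g1 g2 D HD Hg.
  - simpl. replace (Y + 1 * D) with (Y + D) by ring. exact Hg.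
  - simpl. replace (Y + s * s ^ n * D) with (Y + s ^ n * (s * D)) by ring.
    apply IH. intros k Hk. apply Hst. lia.
    apply Rmult_le_pos; auto.
    apply Hst; auto.
Qed.

Lemma comp_split (N : nat) (xs : nat -> R) (alpha : nat -> nat -> R -> R)
  (L : nat -> (R -> R) -> (R -> R)) f R0 :
  (forall k a, dist_le xs N a (fun _ => 0) R0 ->
     dist_le xs N (Tmap xs N alpha f (L k f) k a) (fun _ => 0) R0) ->
  forall n p g, dist_le xs N g (fun _ => 0) R0 ->
  exists W, dist_le xs N W (fun _ => 0) R0 /\
    compT xs N alpha L f (n + p) g = compT xs N alpha L f n W.
Proof.
  intros HT n p. induction p as [|p IH]; intros g Hg.
  - exists g. rewrite Nat.add_0_r. auto.
  - rewrite Nat.add_succ_r. simpl.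
    apply IH. apply HT. exact Hg.
Qed.

Lemma Tball (N : nat) (xs : nat -> R) (HN : (1 <= N)%nat)
  (Hxs : forall k, (k < N)%nat -> xs k < xs (S k))
  (alpha : nat -> nat -> R -> R) (s : R)
  (Hs : forall i r x, (1 <= i <= N)%nat -> inI xs N x -> Rabs (alpha i r x) <= s)
  f b k a cf cb R0 :
  0 <= s -> dist_le xs N f (fun _ => 0) cf -> dist_le xs N b (fun _ => 0) cb ->
  cf + s * (R0 + cb) <= R0 ->
  dist_le xs N a (fun _ => 0) R0 -> dist_le xs N (Tmap xs N alpha f b k a) (fun _ => 0) R0.
Proof.
  intros Hs0 Hf Hb HR Ha x Hx.
  pose proof (Tstep N xs HN Hxs alpha s Hs f (fun _ => 0) b (fun _ => 0) k a (fun _ => 0)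
     cf cb R0 Hs0 Hf Hb Ha x Hx) as H.
  unfold Tmap at 2 in H. replace (0 + alpha (seg xs N x) k (Qmap xs N (seg xs N x) x) * (0 - 0)) with 0 in H by ring.
  lra.
Qed.

Lemma dist_mono xs N g h c c' : dist_le xs N g h c -> c <= c' -> dist_le xs N g h c'.
Proof. intros H Hc x Hx. specialize (H x Hx). lra. Qed.

Lemma cont_bounded (N : nat) (xs : nat -> R) (H0N : xs 0%nat <= xs N) g :
  cont_on_I xs N g -> exists c, 0 < c /\ dist_le xs N g (fun _ => 0) c.
Proof.
  intros Hc.
  set (a := xs 0%nat) in *. set (b := xs N) in *.
  set (cl := fun y => Rmax a (Rmin b y)).
  assert (Hcl : forall y, a <= y <= b -> cl y = y).
  { intros y Hy. unfold cl. rewrite Rmin_right by lra. rewrite Rmax_right; lra. }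
  assert (Hcl2 : forall y, inI xs N (cl y)).
  { intros y. unfold inI, cl. fold a b. split. apply Rmax_l.
    apply Rmax_lub. lra. apply Rmin_l. }
  assert (Hcl3 : forall y z, Rabs (cl y - cl z) <= Rabs (y - z)).
  { intros y z. unfold cl, Rmax, Rmin.
    repeat (destruct Rle_dec); unfold Rabs; repeat destruct Rcase_abs; lra. }
  set (G := fun y => g (cl y)).
  assert (HG : forall c, a <= c <= b -> continuity_pt G c).
  { intros c Hc'. unfold continuity_pt, continue_in, limit1_in, limit_in. simpl.
    unfold Rdist. intros eps Heps.
    destruct (Hc c Hc' eps Heps) as [del [Hdel Hd]].
    exists del. split. lra. intros y [_ Hy]. unfold G.
    rewrite (Hcl c Hc'). apply Hd. apply Hcl2.
    assert (Hz : Rabs (cl y - cl c) < del) by (eapply Rle_lt_trans; [apply Hcl3|exact Hy]).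
    rewrite (Hcl c Hc') in Hz. exact Hz. }
  destruct (continuity_ab_maj G a b H0N HG) as [Mx [HM HMx]].
  destruct (continuity_ab_min G a b H0N HG) as [mx [Hm Hmx]].
  exists (Rabs (G Mx) + Rabs (G mx) + 1). split.
  pose proof (Rabs_pos (G Mx)); pose proof (Rabs_pos (G mx)); lra.
  intros x Hx. specialize (HM x Hx). specialize (Hm x Hx).
  unfold G in HM, Hm. rewrite (Hcl x Hx) in HM, Hm. rewrite Rminus_0_r.
  unfold G. unfold Rabs at 1 2 3; repeat destruct Rcase_abs; lra.
Qed.

Lemma Rpower_pos a b : 0 < Rpower a b.
Proof. unfold Rpower. apply exp_pos. Qed.

Lemma lip_cont (N : nat) (xs : nat -> R) d (Hd : 0 < d) g :
  lipd xs N d g -> cont_on_I xs N g.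
Proof.
  intros [K HK] x Hx eps Heps.
  set (K' := Rabs K + 1).
  assert (HK' : 0 < K') by (unfold K'; pose proof (Rabs_pos K); lra).
  exists (Rpower (eps / K') (/ d)). split. apply Rpower_pos.
  intros y Hy Hyx.
  destruct (Req_dec y x) as [->|Hne]. rewrite Rminus_diag, Rabs_R0. lra.
  specialize (HK y x Hy Hx Hne).
  assert (Hp : 0 < Rabs (y - x)) by (apply Rabs_pos_lt; lra).
  assert (H1 : Rpower (Rabs (y - x)) d < eps / K').
  { replace (eps / K') with (Rpower (Rpower (eps / K') (/ d)) d).
    apply Rlt_Rpower_l; auto.
    rewrite Rpower_mult. rewrite Rinv_l by lra. apply Rpower_1.
    apply Rdiv_lt_0_compat; lra. }
  pose proof (Rpower_pos (Rabs (y - x)) d).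
  assert (K * Rpower (Rabs (y - x)) d <= K' * Rpower (Rabs (y - x)) d).
  { apply Rmult_le_compat_r. lra. unfold K'. pose proof (Rle_abs K). lra. }
  assert (K' * Rpower (Rabs (y - x)) d < K' * (eps / K')).
  { apply Rmult_lt_compat_l; auto. }
  replace (K' * (eps / K')) with eps in * by (field; lra). lra.
Qed.

Lemma lip_const xs N d k : lipd xs N d (fun _ => k).
Proof.
  exists 0. intros. rewrite Rminus_diag, Rabs_R0, Rmult_0_l. lra.
Qed.

Lemma L_bound (N : nat) (xs : nat -> R) d (H0N : xs 0%nat <= xs N)
  (L : nat -> (R -> R) -> (R -> R)) M
  (HB : forall r g c, lipd xs N d g ->
     (exists x, inI xs N x /\ g x <> 0) ->
     dist_le xs N g (fun _ => 0) c -> dist_le xs N (L r g) (fun _ => 0) (M * c))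
  (HL_cont : forall r g, lipd xs N d g -> forall eps, 0 < eps ->
     exists delta, 0 < delta /\ forall h, lipd xs N d h ->
       dist_le xs N g h delta -> dist_le xs N (L r g) (L r h) eps) :
  forall r g c, lipd xs N d g -> 0 < c -> dist_le xs N g (fun _ => 0) c ->
  dist_le xs N (L r g) (fun _ => 0) (Rabs M * c).
Proof.
  intros r g c Hg Hc Hgc.
  destruct (classic (exists x, inI xs N x /\ g x <> 0)) as [Hex|Hno].
  - apply dist_mono with (M * c). apply HB; auto.
    apply Rmult_le_compat_r. lra. apply Rle_abs.
  - assert (Hz : forall x, inI xs N x -> g x = 0).
    { intros x Hx. apply NNPP. intro Hne. apply Hno. exists x. auto. }
    intros x Hx. apply Rle_plus_epsilon. intros eps Heps.
    destruct (HL_cont r g Hg eps Heps) as [del [Hdel Hd]].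
    set (k := Rmin del c).
    assert (Hk : 0 < k) by (apply Rmin_glb_lt; auto).
    assert (Hkd : k <= del) by apply Rmin_l.
    assert (Hkc : k <= c) by apply Rmin_r.
    assert (H1 := Hd (fun _ => k) (lip_const xs N d k)).
    assert (H2 : dist_le xs N g (fun _ => k) del).
    { intros y Hy. rewrite (Hz y Hy). rewrite Rminus_0_l, Rabs_Ropp, Rabs_right; lra. }
    specialize (H1 H2 x Hx).
    assert (H3 := HB r (fun _ => k) c (lip_const xs N d k)).
    assert (H4 : exists x, inI xs N x /\ k <> 0).
    { exists (xs 0%nat). split. unfold inI; lra. lra. }
    assert (H5 : dist_le xs N (fun _ => k) (fun _ => 0) c).
    { intros y Hy. rewrite Rminus_0_r, Rabs_right; lra. }
    specialize (H3 H4 H5 x Hx).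
    rewrite Rminus_0_r in *.
    assert (M * c <= Rabs M * c) by (apply Rmult_le_compat_r; [lra|apply Rle_abs]).
    replace (L r g x) with ((L r g x - L r (fun _ => k) x) + L r (fun _ => k) x) by ring.
    eapply Rle_trans. apply Rabs_triang. lra.
Qed.

Lemma fin_min (P : nat -> R -> Prop) :
  (forall k, exists d, 0 < d /\ P k d) ->
  (forall k d d', 0 < d' <= d -> P k d -> P k d') ->
  forall R, exists d, 0 < d /\ forall k, (k < R)%nat -> P k d.
Proof.
  intros Hex Hmon R. induction R as [|R IH].
  - exists 1. split. lra. intros; lia.
  - destruct IH as [d1 [Hd1 H1]]. destruct (Hex R) as [d2 [Hd2 H2]].
    exists (Rmin d1 d2). split. apply Rmin_glb_lt; auto.
    intros k Hk. destruct (Nat.eq_dec k R) as [->|Hne].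
    + apply Hmon with d2; auto. split. apply Rmin_glb_lt; auto. apply Rmin_r.
    + apply Hmon with d1. split. apply Rmin_glb_lt; auto. apply Rmin_l. apply H1; lia.
Qed.

Lemma tri a b c : Rabs (a - c) <= Rabs (a - b) + Rabs (b - c).
Proof. replace (a - c) with ((a - b) + (b - c)) by ring. apply Rabs_triang. Qed.

Lemma pow_small s : 0 <= s < 1 -> forall C eps, 0 < eps -> 0 <= C ->
  exists n0, forall n, (n0 <= n)%nat -> s ^ n * C < eps.
Proof.
  intros Hs C eps He HC.
  assert (Hy : 0 < eps / (C + 1)) by (apply Rdiv_lt_0_compat; lra).
  destruct (pow_lt_1_zero s ltac:(rewrite Rabs_right; lra) _ Hy) as [n0 Hn0].
  exists n0. intros n Hn. specialize (Hn0 n Hn).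
  pose proof (pow_le s n ltac:(lra)).
  rewrite Rabs_right in Hn0 by lra.
  assert (s ^ n * (C + 1) < eps / (C + 1) * (C + 1)) by (apply Rmult_lt_compat_r; lra).
  replace (eps / (C + 1) * (C + 1)) with eps in H0 by (field; lra). nra.
Qed.

Lemma ball_ok (N : nat) (xs : nat -> R) (HN : (1 <= N)%nat)
  (Hxs : forall k, (k < N)%nat -> xs k < xs (S k))
  (alpha : nat -> nat -> R -> R) (s : R) (Hs01 : 0 <= s < 1)
  (Hs : forall i r x, (1 <= i <= N)%nat -> inI xs N x -> Rabs (alpha i r x) <= s)
  d (L : nat -> (R -> R) -> (R -> R)) M
  (HLb : forall r g c, lipd xs N d g -> 0 < c -> dist_le xs N g (fun _ => 0) c ->
     dist_le xs N (L r g) (fun _ => 0) (Rabs M * c))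
  f cH : lipd xs N d f -> 0 < cH -> dist_le xs N f (fun _ => 0) cH ->
  forall k a, dist_le xs N a (fun _ => 0) (cH * (1 + Rabs M) / (1 - s)) ->
  dist_le xs N (Tmap xs N alpha f (L k f) k a) (fun _ => 0) (cH * (1 + Rabs M) / (1 - s)).
Proof.
  intros Hf HcH Hfc k a Ha.
  apply (Tball N xs HN Hxs alpha s Hs) with (cf := cH) (cb := Rabs M * cH); auto. lra.
  set (R0 := cH * (1 + Rabs M) / (1 - s)).
  assert (HR : (1 - s) * R0 = cH * (1 + Rabs M)) by (unfold R0; field; lra).
  pose proof (Rabs_pos M).
  assert (s * (Rabs M * cH) <= Rabs M * cH). { rewrite <- (Rmult_1_l (Rabs M * cH)) at 2. apply Rmult_le_compat_r. apply Rmult_le_pos; lra. lra. } lra.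
Qed.

Lemma R0_ge cH M s : 0 < cH -> 0 <= s < 1 -> cH <= cH * (1 + Rabs M) / (1 - s).
Proof.
  intros H Hs. pose proof (Rabs_pos M).
  apply Rmult_le_reg_r with (1 - s). lra.
  replace (cH * (1 + Rabs M) / (1 - s) * (1 - s)) with (cH * (1 + Rabs M)) by (field; lra).
  nra.
Qed.

Lemma dist_ball xs N g h c : dist_le xs N g (fun _ => 0) c -> dist_le xs N h (fun _ => 0) c ->
  dist_le xs N g h (c + c).
Proof.
  intros H1 H2 x Hx. specialize (H1 x Hx). specialize (H2 x Hx).
  rewrite Rminus_0_r in *. eapply Rle_trans. apply (tri _ 0).
  rewrite Rminus_0_l, Rabs_Ropp, Rminus_0_r. lra.
Qed.

Lemma same_step (N : nat) (xs : nat -> R) (HN : (1 <= N)%nat)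
  (Hxs : forall k, (k < N)%nat -> xs k < xs (S k))
  (alpha : nat -> nat -> R -> R) (s : R) (Hs01 : 0 <= s < 1)
  (Hs : forall i r x, (1 <= i <= N)%nat -> inI xs N x -> Rabs (alpha i r x) <= s)
  (L : nat -> (R -> R) -> (R -> R)) f :
  forall k a b D, 0 <= D -> dist_le xs N a b (0 + D) ->
     dist_le xs N (Tmap xs N alpha f (L k f) k a) (Tmap xs N alpha f (L k f) k b) (0 + s * D).
Proof.
  intros k a b D HD Hab.
  apply dist_mono with (0 + s * (0 + D + 0)).
  apply (Tstep N xs HN Hxs alpha s Hs); auto. lra.
  intros x _. rewrite Rminus_diag, Rabs_R0. lra.
  intros x _. rewrite Rminus_diag, Rabs_R0. lra.
  lra.
Qed.

Lemma exist_fractal (N : nat) (xs : nat -> R) (HN : (1 <= N)%nat)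
  (Hxs : forall k, (k < N)%nat -> xs k < xs (S k))
  (alpha : nat -> nat -> R -> R) (s : R) (Hs01 : 0 <= s < 1)
  (Hs : forall i r x, (1 <= i <= N)%nat -> inI xs N x -> Rabs (alpha i r x) <= s)
  d (Hd : 0 < d) (L : nat -> (R -> R) -> (R -> R)) M
  (HLb : forall r g c, lipd xs N d g -> 0 < c -> dist_le xs N g (fun _ => 0) c ->
     dist_le xs N (L r g) (fun _ => 0) (Rabs M * c))
  f : lipd xs N d f -> exists phi, is_fractal xs N alpha L f phi.
Proof.
  intros Hf.
  assert (H0N : xs 0%nat <= xs N) by (apply (xs_mono0 N); auto).
  destruct (cont_bounded N xs H0N f (lip_cont N xs d Hd f Hf)) as [cF [HcF HfF]].
  set (R0 := cF * (1 + Rabs M) / (1 - s)).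
  assert (HR0 : cF <= R0) by (apply R0_ge; auto).
  assert (Hball := ball_ok N xs HN Hxs alpha s Hs01 Hs d L M HLb f cF Hf HcF HfF).
  fold R0 in Hball.
  assert (HfR : dist_le xs N f (fun _ => 0) R0) by (apply dist_mono with cF; auto).
  set (u := fun n x => compT xs N alpha L f n f x).
  assert (Htail : forall n p x, inI xs N x -> Rabs (u (n + p)%nat x - u n x) <= s ^ n * (R0 + R0)).
  { intros n p x Hx. destruct (comp_split N xs alpha L f R0 Hball n p f HfR) as [W [HW HWe]].
    unfold u. rewrite HWe.
    assert (H := comp_bound N xs alpha L f f 0 s ltac:(lra) n
      (fun k _ => same_step N xs HN Hxs alpha s Hs01 Hs L f k) W f (R0 + R0)
      ltac:(lra) ltac:(apply dist_mono with (R0 + R0); [apply dist_ball; auto|lra]) x Hx).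
    lra. }
  assert (Hex : forall x, exists l, inI xs N x -> Un_cv (fun n => u n x) l).
  { intros x. destruct (classic (inI xs N x)) as [Hx|Hx]; [|exists 0; tauto].
    assert (Hc : Cauchy_crit (fun n => u n x)).
    { intros eps Heps.
      destruct (pow_small s Hs01 (4 * R0) eps Heps ltac:(lra)) as [N0 HN0].
      exists N0. intros n m Hn Hm. unfold Rdist.
      assert (H1 := Htail N0 (n - N0)%nat x Hx).
      assert (H2 := Htail N0 (m - N0)%nat x Hx).
      replace (N0 + (n - N0))%nat with n in H1 by lia.
      replace (N0 + (m - N0))%nat with m in H2 by lia.
      specialize (HN0 N0 (le_n _)).
      eapply Rle_lt_trans. apply (tri _ (u N0 x)). rewrite (Rabs_minus_sym (u N0 x)). lra. }
    destruct (R_complete _ Hc) as [l Hl]. exists l. auto. }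
  set (phi := fun x => proj1_sig (constructive_indefinite_description _ (Hex x))).
  assert (Hphi : forall x, inI xs N x -> Un_cv (fun n => u n x) (phi x)).
  { intros x Hx. unfold phi. destruct (constructive_indefinite_description _ (Hex x)) as [l Hl].
    simpl. auto. }
  assert (Hconv : forall n x, inI xs N x -> Rabs (u n x - phi x) <= s ^ n * (R0 + R0)).
  { intros n x Hx. apply Rle_plus_epsilon. intros eps Heps.
    destruct (Hphi x Hx eps Heps) as [N1 HN1].
    specialize (HN1 (n + N1)%nat ltac:(lia)). unfold Rdist in HN1.
    specialize (Htail n N1 x Hx).
    eapply Rle_trans. apply (tri _ (u (n + N1)%nat x)). rewrite Rabs_minus_sym. lra. }
  exists phi. intros g [Hgc [Hg0 HgN]] eps Heps.
  destruct (cont_bounded N xs H0N g Hgc) as [cg [Hcg Hgb]].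
  destruct (pow_small s Hs01 (cg + R0 + (R0 + R0)) eps Heps ltac:(lra)) as [n0 Hn0].
  assert (Hgf : dist_le xs N g f (0 + (cg + R0))).
  { intros y Hy. specialize (Hgb y Hy). specialize (HfR y Hy). rewrite Rminus_0_r in *.
    eapply Rle_trans. apply (tri _ 0). rewrite Rminus_0_r, Rminus_0_l, Rabs_Ropp. lra. }
  exists n0. intros n Hn x Hx.
  assert (H := comp_bound N xs alpha L f f 0 s ltac:(lra) n
      (fun k _ => same_step N xs HN Hxs alpha s Hs01 Hs L f k) g f (cg + R0)
      ltac:(lra) Hgf x Hx).
  specialize (Hconv n x Hx). specialize (Hn0 n Hn). fold (u n x) in H.
  eapply Rle_trans. apply (tri _ (u n x)). unfold u in *. lra.
Qed.

Lemma cont_fractal (N : nat) (xs : nat -> R) (HN : (1 <= N)%nat)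
  (Hxs : forall k, (k < N)%nat -> xs k < xs (S k))
  (alpha : nat -> nat -> R -> R) (s : R) (Hs01 : 0 <= s < 1)
  (Hs : forall i r x, (1 <= i <= N)%nat -> inI xs N x -> Rabs (alpha i r x) <= s)
  d (Hd : 0 < d) (L : nat -> (R -> R) -> (R -> R)) M
  (HLb : forall r g c, lipd xs N d g -> 0 < c -> dist_le xs N g (fun _ => 0) c ->
     dist_le xs N (L r g) (fun _ => 0) (Rabs M * c))
  (HL_cont : forall r g, lipd xs N d g -> forall eps, 0 < eps ->
     exists delta, 0 < delta /\ forall h, lipd xs N d h ->
       dist_le xs N g h delta -> dist_le xs N (L r g) (L r h) eps)
  f eps : lipd xs N d f -> 0 < eps ->
     exists delta, 0 < delta /\ forall h, lipd xs N d h ->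
       dist_le xs N f h delta ->
       forall phi psi, is_fractal xs N alpha L f phi ->
         is_fractal xs N alpha L h psi -> dist_le xs N phi psi eps.
Proof.
  intros Hf Heps.
  assert (H0N : xs 0%nat <= xs N) by (apply (xs_mono0 N); auto).
  destruct (cont_bounded N xs H0N f (lip_cont N xs d Hd f Hf)) as [cF [HcF HfF]].
  set (cH := cF + 1).
  assert (HcH : 0 < cH) by (unfold cH; lra).
  set (R0 := cH * (1 + Rabs M) / (1 - s)).
  assert (HR0 : cH <= R0) by (apply R0_ge; auto).
  set (Y := eps / 4).
  destruct (pow_small s Hs01 (R0 + R0) Y ltac:(unfold Y; lra) ltac:(lra)) as [R HR].
  specialize (HR R (le_n _)).
  set (eta := (1 - s) * Y / 2).
  assert (Heta : 0 < eta).
  { unfold eta, Y. apply Rdiv_lt_0_compat; [apply Rmult_lt_0_compat|]; lra. }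
  assert (Hseta : s * eta <= eta).
  { rewrite <- (Rmult_1_l eta) at 2. apply Rmult_le_compat_r; lra. }
  destruct (fin_min (fun k del => forall h, lipd xs N d h -> dist_le xs N f h del ->
       dist_le xs N (L k f) (L k h) eta)) with (R := R) as [d1 [Hd1 HP]].
  { intros k. exact (HL_cont k f Hf eta Heta). }
  { intros k del del' Hdd HP h Hh Hfh. apply HP; auto. apply dist_mono with del'; auto; lra. }
  exists (Rmin d1 (Rmin 1 eta)).
  assert (Hm1 := Rmin_l d1 (Rmin 1 eta)).
  assert (Hm2 := Rmin_r d1 (Rmin 1 eta)).
  assert (Hm3 := Rmin_l 1 eta). assert (Hm4 := Rmin_r 1 eta).
  split. { apply Rmin_glb_lt; auto. apply Rmin_glb_lt; lra. }
  set (del := Rmin d1 (Rmin 1 eta)) in *.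
  intros h Hh Hfh phi psi Hphi Hpsi x Hx.
  assert (HfH : dist_le xs N f (fun _ => 0) cH) by (apply dist_mono with cF; auto; unfold cH; lra).
  assert (HhH : dist_le xs N h (fun _ => 0) cH).
  { intros y Hy. specialize (Hfh y Hy). specialize (HfF y Hy). rewrite Rminus_0_r in *.
    replace (h y) with ((h y - f y) + f y) by ring.
    eapply Rle_trans. apply Rabs_triang. rewrite Rabs_minus_sym. unfold cH. lra. }
  assert (Hbf := ball_ok N xs HN Hxs alpha s Hs01 Hs d L M HLb f cH Hf HcH HfH).
  assert (Hbh := ball_ok N xs HN Hxs alpha s Hs01 Hs d L M HLb h cH Hh HcH HhH).
  fold R0 in Hbf, Hbh.
  assert (HfR : dist_le xs N f (fun _ => 0) R0) by (apply dist_mono with cH; auto).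
  assert (HhR : dist_le xs N h (fun _ => 0) R0) by (apply dist_mono with cH; auto).
  assert (Hfc : in_Cf xs N f f) by (split; [apply (lip_cont N xs d Hd f Hf)|auto]).
  assert (Hhc : in_Cf xs N h h) by (split; [apply (lip_cont N xs d Hd h Hh)|auto]).
  destruct (Hphi f Hfc (eps / 8) ltac:(lra)) as [n1 Hn1].
  destruct (Hpsi h Hhc (eps / 8) ltac:(lra)) as [n2 Hn2].
  specialize (Hn1 (R + (n1 + n2))%nat ltac:(lia) x Hx).
  specialize (Hn2 (R + (n1 + n2))%nat ltac:(lia) x Hx).
  destruct (comp_split N xs alpha L f R0 Hbf R (n1 + n2) f HfR) as [W1 [HW1 E1]].
  destruct (comp_split N xs alpha L h R0 Hbh R (n1 + n2) h HhR) as [W2 [HW2 E2]].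
  rewrite E1 in Hn1. rewrite E2 in Hn2.
  assert (Hst : forall k, (k < R)%nat -> forall a b D, 0 <= D -> dist_le xs N a b (Y + D) ->
     dist_le xs N (Tmap xs N alpha f (L k f) k a) (Tmap xs N alpha h (L k h) k b) (Y + s * D)).
  { intros k Hk a b D HD Hab.
    apply dist_mono with (del + s * (Y + D + eta)).
    apply (Tstep N xs HN Hxs alpha s Hs); auto. lra.
    apply (HP k Hk h Hh). apply dist_mono with del; auto.
    unfold eta in *. lra. }
  assert (HW : dist_le xs N W1 W2 (Y + (R0 + R0))).
  { apply dist_mono with (R0 + R0). apply dist_ball; auto. unfold Y; lra. }
  assert (Hmain := comp_bound N xs alpha L f h Y s ltac:(lra) R Hst W1 W2 (R0 + R0)
     ltac:(pose proof (R0_ge cH M s HcH Hs01); lra) HW x Hx).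
  eapply Rle_trans. apply (tri _ (compT xs N alpha L f R W1 x)).
  rewrite Rabs_minus_sym.
  eapply Rle_trans. apply Rplus_le_compat_l. apply (tri _ (compT xs N alpha L h R W2 x)).
  unfold Y in *. lra.
Qed.

Theorem mainTheorem3
  (N : nat) (xs : nat -> R) (d : R)
  (alpha : nat -> nat -> R -> R) (L : nat -> (R -> R) -> (R -> R))
  (HN : (1 <= N)%nat)
  (Hxs : forall k, (k < N)%nat -> xs k < xs (S k))
  (Hd : 0 < d <= 1)
  (Halpha_cont : forall i r, (1 <= i <= N)%nat -> cont_on_I xs N (alpha i r))
  (Halpha_norm : exists s, s < 1 /\
     forall i r x, (1 <= i <= N)%nat -> inI xs N x -> Rabs (alpha i r x) <= s)
  (HL_wd : forall r g h, lipd xs N d g -> lipd xs N d h ->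
     (forall x, inI xs N x -> g x = h x) ->
     forall x, inI xs N x -> L r g x = L r h x)
  (HL_lip : forall r g, lipd xs N d g -> lipd xs N d (L r g))
  (HL_end : forall r g, lipd xs N d g ->
     L r g (xs 0%nat) = g (xs 0%nat) /\ L r g (xs N) = g (xs N))
  (HL_bdd : exists M, forall r g c, lipd xs N d g ->
     (exists x, inI xs N x /\ g x <> 0) ->
     dist_le xs N g (fun _ => 0) c -> dist_le xs N (L r g) (fun _ => 0) (M * c))
  (HL_cont : forall r g, lipd xs N d g -> forall eps, 0 < eps ->
     exists delta, 0 < delta /\ forall h, lipd xs N d h ->
       dist_le xs N g h delta -> dist_le xs N (L r g) (L r h) eps) :
  (forall f, lipd xs N d f -> exists phi, is_fractal xs N alpha L f phi) /\
  (forall f eps, lipd xs N d f -> 0 < eps ->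
     exists delta, 0 < delta /\ forall h, lipd xs N d h ->
       dist_le xs N f h delta ->
       forall phi psi, is_fractal xs N alpha L f phi ->
         is_fractal xs N alpha L h psi -> dist_le xs N phi psi eps).
Proof.
  assert (H0N : xs 0%nat <= xs N) by (apply (xs_mono0 N); auto).
  destruct Halpha_norm as [s [Hs1 Hs]].
  assert (Hs0 : 0 <= s).
  { pose proof (Hs 1%nat 0%nat (xs 0%nat) ltac:(lia) ltac:(unfold inI; lra)).
    pose proof (Rabs_pos (alpha 1%nat 0%nat (xs 0%nat))). lra. }
  assert (Hs01 : 0 <= s < 1) by lra.
  destruct HL_bdd as [M HM].
  assert (HLb := L_bound N xs d H0N L M HM HL_cont).
  split.
  - intros f Hf. apply (exist_fractal N xs HN Hxs alpha s Hs01 Hs d ltac:(lra) L M HLb f Hf).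
  - intros f eps Hf Heps.
    apply (cont_fractal N xs HN Hxs alpha s Hs01 Hs d ltac:(lra) L M HLb HL_cont f eps Hf Heps).
Qed.
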